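(* Let $v=v(z)=zM(z)$, where $M(z)=\frac{1-z-\sqrt{1-2z-3z^2}}{2z^2}$ is the Motzkin generating function (so $z=\frac{v}{1+v+v^2}$). For every integer $h\ge0$, the generating function, by number of nodes, of Retakh plane trees of height at most $2h$ (for $h=0$: of height at most $1$) is $$\frac{z}{1-z}\cdot\frac{1}{1-\dfrac{F_h}{1-z}}=v\,\frac{1-v^{2h+2}}{1-v^{2h+4}}$$ for $h\ge1$, where $F_h=\frac{v^2}{1+v+v^2}\frac{1-v^{2h}}{1-v^{2h+2}}$, and equals $\frac{z}{1-z}=\frac{v}{1+v^2}$ for $h=0$.
   Context: A Retakh plane tree is a plane (ordered rooted) tree in which every non-root leaf has depth $1$ or even depth (root depth $0$); the one-node tree is included. These correspond bijectively (a tree with $n+1$ nodes to a path of semilength $n$) to Dyck paths all of whose peaks are at level $1$ or at an even level. The height of a tree is the maximal depth of a node, i.e. the number of edges of a longest root-to-node path; it equals the maximal height of the corresponding Dyck path. *)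

(* Defs.v *)
From HB Require Import structures.
From mathcomp Require Import all_boot all_order all_algebra.
From mathcomp Require Import all_classical all_reals all_analysis.

Set Implicit Arguments.
Unset Strict Implicit.
Unset Printing Implicit Defensive.

Inductive ptree : Type := PNode of seq ptree.

Fixpoint nnodes (t : ptree) : nat :=
  let: PNode ts := t in (sumn (map nnodes ts)).+1.

(* height = maximal depth of a node (number of edges of a longest
   root-to-node path); the one-node tree has height 0. *)
Fixpoint height (t : ptree) : nat :=
  let: PNode ts := t in
  if ts is [::] then 0 else (foldr maxn 0 (map height ts)).+1.

(* retakh_at d t : every leaf of t, viewed as a subtree whose root is at
   depth d, has depth 1 or even depth.  (The root, at depth 0, is even,
   so the one-node tree is included.) *)
Fixpoint retakh_at (d : nat) (t : ptree) : bool :=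
  let: PNode ts := t in
  if ts is [::] then (d == 1) || ~~ odd d
  else all (retakh_at d.+1) ts.

Definition retakh (t : ptree) : bool := retakh_at 0 t.

Fixpoint ptree_enc (t : ptree) : GenTree.tree unit :=
  let: PNode ts := t in GenTree.Node 0 (map ptree_enc ts).

Fixpoint ptree_dec (g : GenTree.tree unit) : ptree :=
  match g with
  | GenTree.Leaf _ => PNode [::]
  | GenTree.Node _ gs => PNode (map ptree_dec gs)
  end.

Fixpoint ptree_encK (t : ptree) : ptree_dec (ptree_enc t) = t :=
  match t return ptree_dec (ptree_enc t) = t with
  | PNode ts => f_equal PNode
      ((fix aux (ts : seq ptree) : map ptree_dec (map ptree_enc ts) = ts :=
          match ts return map ptree_dec (map ptree_enc ts) = ts with
          | [::] => erefl
          | t :: ts' => f_equal2 cons (ptree_encK t) (aux ts')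
          end) ts)
  end.

HB.instance Definition _ := Countable.copy ptree (can_type ptree_encK).

(* Main.v *)
Require Import Defs.
From HB Require Import structures.
From mathcomp Require Import all_boot all_order all_algebra.
From mathcomp Require Import all_classical all_reals all_analysis.
From mathcomp Require Import ring lra zify.
Import Order.TTheory GRing.Theory Num.Theory.
Local Open Scope classical_set_scope.
Local Open Scope ring_scope.

Lemma esumZl (R : realType) (T : choiceType) (I : set T) (a : T -> \bar R) (r : R) :
  (0 <= r)%R -> (forall i, 0 <= a i)%E ->
  (\esum_(i in I) (r%:E * a i) = r%:E * \esum_(i in I) a i)%E.
Proof.
move=> r0 a0; rewrite /esum -ereal_supZl //; last first.
  apply/set0P; exists (\sum_(i \in set0) a i)%E; exists set0 => //; exact: fsets_set0.
congr ereal_sup; apply/seteqP; split => x /=.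
- move=> [A hA <-]; exists (\sum_(i \in A) a i)%E; first by exists A.
  by rewrite ge0_mule_fsumr.
- move=> [y [A hA <-] <-]; exists A => //; rewrite ge0_mule_fsumr //.
Qed.

Lemma geo_sum (R : realType) (s : R) : 0 <= s -> s < 1 ->
  (\sum_(k <oo) (s ^+ k)%:E = ((1 - s)^-1)%:E)%E.
Proof.
move=> s0 s1; apply: cvg_lim => //.
have -> : (fun n => \sum_(0 <= k < n) (s ^+ k)%:E)%E = (fun n => (\sum_(0 <= k < n) s ^+ k)%:E).
  by apply/funext => n; rewrite sumEFin.
apply: cvg_EFin; first by apply: nearW.
have := @cvg_geometric_series R 1 s; rewrite ger0_norm // => /(_ s1).
rewrite mul1r.
have -> : series (geometric 1 s) = (fun n => \sum_(0 <= k < n) s ^+ k).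
  apply/funext => n; rewrite /series /=; apply: eq_bigr => k _; rewrite /geometric /= mul1r //.
by [].
Qed.

Section Forest.
Variable R : realType.
Variable z : R.
Hypothesis z0 : 0 <= z.

Definition wt (t : ptree) : \bar R := (z ^+ nnodes t)%:E.
Definition fw (ts : seq ptree) : \bar R := (\prod_(t <- ts) z ^+ nnodes t)%:E.

Lemma wt_ge0 t : (0 <= wt t)%E.
Proof. by rewrite lee_fin exprn_ge0. Qed.
Lemma fw_ge0 ts : (0 <= fw ts)%E.
Proof. by rewrite lee_fin prodr_ge0 // => t _; rewrite exprn_ge0. Qed.

Lemma wt_node ts : wt (PNode ts) = (z%:E * fw ts)%E.
Proof.
rewrite /wt /fw /= -EFinM; congr EFin; rewrite exprS; congr (_ * _).
elim: ts => [|t ts IH] /=; first by rewrite big_nil.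
by rewrite big_cons exprD IH.
Qed.

Lemma esum_cons (P : set ptree) (Q : set (seq ptree)) (s q : R) :
  0 <= q ->
  \esum_(t in P) wt t = s%:E -> \esum_(ts in Q) fw ts = q%:E ->
  \esum_(ts in (fun p => p.1 :: p.2) @` (P `*` Q)) fw ts = (s * q)%:E.
Proof.
move=> q0 hs hq.
rewrite esum_image; last by move=> [x1 y1] [x2 y2] _ _ /= [-> ->].
have -> : \esum_(i in P `*` Q) fw (i.1 :: i.2) = \esum_(i in P `*`` (fun=> Q)) ((fun x y => (wt x * fw y)%E) i.1 i.2).
  by apply: eq_esum => -[x y] _; rewrite /fw /wt big_cons EFinM.
rewrite -(esum_esum (a := fun x y => (wt x * fw y)%E)); last by move=> i j _ _; rewrite mule_ge0 // ?wt_ge0 ?fw_ge0.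
rewrite (eq_esum (b := fun i => (q%:E * wt i)%E)); last first.
  move=> i _ /=; rewrite /wt esumZl ?exprn_ge0 //; last exact: fw_ge0.
  by rewrite hq muleC.
rewrite esumZl //; last exact: wt_ge0.
by rewrite hs -EFinM mulrC.
Qed.

Definition Lk (P : set ptree) (k : nat) : set (seq ptree) :=
  [set ts : seq ptree | size ts = k /\ forall t : ptree, t \in ts -> P t].

Lemma esum_Lk (P : set ptree) (s : R) : 0 <= s ->
  \esum_(t in P) wt t = s%:E -> forall k,
  \esum_(ts in Lk P k) fw ts = (s ^+ k)%:E.
Proof.
move=> s0 hs; elim => [|k IH].
  have -> : Lk P 0 = [set [::]].
    apply/seteqP; split => ts /=; first by case=> /size0nil.
    by move=> ->; split.
  by rewrite esum_set1 ?fw_ge0 // /fw big_nil expr0.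
have -> : Lk P k.+1 = (fun p => p.1 :: p.2) @` (P `*` Lk P k).
  apply/seteqP; split => ts /=.
  - case: ts => [|t ts] [] //= [hk] hP.
    exists (t, ts) => //; split => /=; first by apply: hP; rewrite mem_head.
    by split => // u hu; apply: hP; rewrite in_cons hu orbT.
  - move=> [[t ts'] [/= Pt [hk hP]] <-]; split => /=; first by rewrite hk.
    by move=> u; rewrite in_cons => /orP[/eqP ->|/hP].
by rewrite (@esum_cons P (Lk P k) s (s ^+ k) (exprn_ge0 k s0) hs IH) exprS.
Qed.

Definition Forest (P : set ptree) : set (seq ptree) :=
  [set ts : seq ptree | forall t : ptree, t \in ts -> P t].

Lemma esum_forest (P : set ptree) (s : R) : 0 <= s -> s < 1 ->
  \esum_(t in P) wt t = s%:E ->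
  \esum_(ts in Forest P) fw ts = ((1 - s)^-1)%:E.
Proof.
move=> s0 s1 hs.
have -> : Forest P = \bigcup_(k in setT) Lk P k.
  apply/seteqP; split => ts /=.
  - by move=> h; exists (size ts) => //.
  - by move=> [k _ [_ h]].
rewrite esum_bigcupT; last exact: fw_ge0.
  rewrite (eq_esum (b := fun k => (s ^+ k)%:E)); last by move=> k _; exact: esum_Lk.
  rewrite -nneseries_esumT; last by move=> n; rewrite lee_fin exprn_ge0.
  exact: geo_sum.
move=> i j _ _ [ts [[hi _] [hj _]]]; by rewrite -hi -hj.
Qed.

Lemma esum_nonempty (P : set ptree) (s : R) : 0 <= s -> s < 1 ->
  \esum_(t in P) wt t = s%:E ->
  \esum_(ts in Forest P `\` [set [::]]) fw ts = (s / (1 - s))%:E.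
Proof.
move=> s0 s1 hs.
have -> : Forest P `\` [set [::]] = (fun p => p.1 :: p.2) @` (P `*` Forest P).
  apply/seteqP; split => ts /=.
  - case: ts => [|t ts] [hP] //= _.
    exists (t, ts) => //; split => /=; first by apply: hP; rewrite mem_head.
    by move=> u hu; apply: hP; rewrite in_cons hu orbT.
  - move=> [[t ts'] [/= Pt hP] <-]; split => //.
    by move=> u; rewrite in_cons => /orP[/eqP ->|/hP].
rewrite (@esum_cons P (Forest P) s ((1 - s)^-1) _ hs (@esum_forest P s s0 s1 hs)) //.
by rewrite invr_ge0 subr_ge0 ltW.
Qed.

End Forest.
Arguments wt {R} z t.
Arguments fw {R} z ts.
Arguments wt_ge0 {R z} z0 t.
Arguments fw_ge0 {R z} z0 ts.
Arguments wt_node {R} z ts.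
Arguments esum_forest {R z} z0 {P s}.
Arguments esum_nonempty {R z} z0 {P s}.

Definition lc (d : nat) : bool := (d == 1%N) || ~~ odd d.
Definition T (d k : nat) : set ptree := [set t | retakh_at d t && (height t <= k)%N].

Lemma foldr_max_le (ts : seq ptree) k :
  (foldr maxn 0 (map height ts) <= k)%N = all (fun t => height t <= k)%N ts.
Proof. by elim: ts => [|t ts IH] //=; rewrite geq_max IH. Qed.

Lemma T0E d : T d 0 = if lc d then [set PNode [::]] else set0.
Proof.
apply/seteqP; split => t; rewrite /T /=.
- case: t => -[|u us] /=.
    by rewrite andbT /lc => ->.
  by rewrite andbF.
- case: ifP => // hl ->; by rewrite /= andbT.
Qed.

Lemma heightS ts k : (height (PNode ts) <= k.+1)%N = all (fun t => height t <= k)%N ts.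
Proof. by case: ts => [|u us] //; rewrite -[height _]/(_.+1) ltnS foldr_max_le. Qed.

Lemma TSE d k : T d k.+1 = PNode @`
   (if lc d then Forest (T d.+1 k) else Forest (T d.+1 k) `\` [set [::]]).
Proof.
apply/seteqP; split => t; rewrite /T /=.
- case: t => ts; rewrite heightS; case: ts => [|u us].
  + move=> /andP[hl _]; exists [::] => //.
    have -> : lc d = true by exact: hl.
    by move=> x.
  + move=> /andP[/allP ha /allP hh].
    exists (u :: us) => //.
    have hF : Forest (T d.+1 k) (u :: us).
      by move=> x hx; apply/andP; split; [exact: ha | exact: hh].
    by case: ifP.
- move=> [ts hts <-]; rewrite heightS; case: ts hts => [|u us].
  + case: ifP => hl; last by case=> _ /(_ erefl).
    by move=> _; rewrite /lc in hl; rewrite /= hl.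
  + move=> hF.
    have hF' : Forest (T d.+1 k) (u :: us) by case: ifP hF => _ // [].
    by apply/andP; split; apply/allP => x /hF' /andP[].
Qed.

Section TreeSums.
Variable R : realType.
Variable z : R.
Hypothesis z0 : 0 <= z.

Lemma esumT0 d : \esum_(t in T d 0) wt z t = (if lc d then z else 0)%:E.
Proof.
rewrite T0E; case: ifP => _; last by rewrite esum_set0.
by rewrite esum_set1 ?(wt_ge0 z0) // /wt /= expr1.
Qed.

Lemma esumTS d k s : 0 <= s -> s < 1 ->
  \esum_(t in T d.+1 k) wt z t = s%:E ->
  \esum_(t in T d k.+1) wt z t =
    (if lc d then z / (1 - s) else z * (s / (1 - s)))%:E.
Proof.
move=> s0 s1 hs; rewrite TSE esum_image; last by move=> x y _ _ [].
under eq_esum do rewrite wt_node.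
rewrite esumZl //; last exact: (fw_ge0 z0).
case: ifP => _.
  by rewrite (esum_forest z0 s0 s1 hs) -EFinM.
by rewrite (esum_nonempty z0 s0 s1 hs) -EFinM.
Qed.
End TreeSums.

Lemma pow_w_lt (R : realType) (v w : R) k : 0 < v -> v < 1 -> 0 < w -> w <= 1 ->
  0 < 1 - v ^+ k.+1 * w.
Proof.
move=> v0 v1 w0 w1.
have : v ^+ k.+1 < 1 by rewrite exprn_ilt1 // ltW.
have : 0 < v ^+ k.+1 by rewrite exprn_gt0.
set x := v ^+ k.+1; nra.
Qed.

Fixpoint eo {R : realType} (z : R) (k : nat) : R * R :=
  if k is k'.+1 then (z / (1 - (eo z k').2), z * ((eo z k').1 / (1 - (eo z k').1)))
  else (z, 0).

Lemma eo_bounds (R : realType) (z v : R) : 0 < z -> 0 < v -> v < 1 ->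
  z * (1 + v + v ^+ 2) = v -> forall k,
  [/\ 0 <= (eo z k).1, (eo z k).1 * (1 + v) <= v, 0 <= (eo z k).2 & (eo z k).2 <= z * v].
Proof.
move=> z0 v0 v1 hz; have zv1 : z * v < 1 by nra.
elim => [|k [e0 e1 o0 o1]] /=.
  split; [lra | nra | lra | nra].
set e := (eo z k).1 in e0 e1 *; set o := (eo z k).2 in o0 o1 *.
have ho : 0 < 1 - o by lra.
have he : 0 < 1 - e by nra.
have E1 : z / (1 - o) * (1 - o) = z by rewrite mulfVK // gt_eqF.
have E2 : e / (1 - e) * (1 - e) = e by rewrite mulfVK // gt_eqF.
set a := z / (1 - o) in E1 *; set b := e / (1 - e) in E2 *.
have a0 : 0 <= a by rewrite /a divr_ge0 // ?ltW.
have b0 : 0 <= b by rewrite /b divr_ge0 // ?ltW.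
split.
- exact: a0.
- nra.
- by rewrite mulr_ge0 // ltW.
- have : b <= v by nra.
  nra.
Qed.

Lemma eo_even (R : realType) (z v : R) : 0 < z -> 0 < v -> v < 1 ->
  z * (1 + v + v ^+ 2) = v -> forall j,
  (eo z (2 * j)).1 = v * (1 - v ^+ 2 * v ^+ (2 * j)) / ((1 + v) * (1 - v ^+ 3 * v ^+ (2 * j))).
Proof.
move=> z0 v0 v1 hz.
have D0 : 0 < 1 + v + v ^+ 2 by nra.
have zE : z = v / (1 + v + v ^+ 2) by rewrite -{1}hz mulfK // gt_eqF.
have B := @eo_bounds _ z v z0 v0 v1 hz.
elim => [|j IH].
  rewrite /= zE; field; nra.
have -> : (2 * j.+1 = (2 * j).+2)%N by rewrite mulnS.
rewrite /=.
have [e0 e1 _ _] := B (2 * j)%N.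
set e := (eo z (2 * j)).1 in e0 e1 IH *.
have [_ _ o0 o1] := B (2 * j).+1.
rewrite /= -/e in o0 o1.
set w := v ^+ (2 * j) in IH *.
have w0 : 0 < w by rewrite exprn_gt0.
have w1 : w <= 1 by rewrite exprn_ile1 // ltW.
rewrite !exprS expr0 mulr1 in IH *.
rewrite zE IH.
rewrite -/w.
have P k := @pow_w_lt _ v w k v0 v1 w0 w1.
have eqpos (x y : R) : x = y -> 0 < x -> y != 0 by move=> -> /gt_eqF ->.
field.


repeat (apply/andP; split).
- by apply: (eqpos _ _ _ (P 4%N)); ring.
- by rewrite gt_eqF //; lra.
- by apply: (eqpos _ _ _ (P 2%N)); ring.
- by apply: (eqpos _ _ _ (P 3%N)); ring.
- by rewrite gt_eqF.
- have := P 4%N; have : 0 < (1 + v) by lra.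
  move=> h1 h2; apply: (eqpos ((1 + v) * (1 - v ^+ 5 * w))); first ring.
  exact: mulr_gt0.
Qed.

Lemma esumT_ge2 (R : realType) (z v : R) : 0 < z -> 0 < v -> v < 1 ->
  z * (1 + v + v ^+ 2) = v -> forall k d, (2 <= d)%N ->
  \esum_(t in T d k) wt z t = (if odd d then (eo z k).2 else (eo z k).1)%:E.
Proof.
move=> z0 v0 v1 hz; have z0' : 0 <= z by exact: ltW.
have B := @eo_bounds _ z v z0 v0 v1 hz.
elim => [|k IH] d hd.
  have hn1 : (d == 1%N) = false by case: d hd => [|[|d]].
  by rewrite esumT0 // /lc hn1 /=; case: (odd d).
have [e0 e1 o0 o1] := B k.
have zv1 : z * v < 1 by nra.
have hd1 : (2 <= d.+1)%N by apply: leq_trans hd _.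
case ho : (odd d).
- have := IH d.+1 hd1; rewrite /= ho /= => hs.
  rewrite (@esumTS _ z z0' d k _ _ _ hs) //; last by nra.
  have hn1 : (d == 1%N) = false by case: d hd {ho hs hd1} => [|[|d]].
  by rewrite /lc ho hn1.
- have := IH d.+1 hd1; rewrite /= ho /= => hs.
  rewrite (@esumTS _ z z0' d k _ _ _ hs) //; last by lra.
  by rewrite /lc ho orbT.
Qed.

Theorem mainTheorem3 (R : realType) (h : nat) (z : R)
    (hz0 : 0 < z) (hz1 : z < 3^-1) :
  let M := (1 - z - Num.sqrt (1 - 2 * z - 3 * z ^+ 2)) / (2 * z ^+ 2) in
  let v := z * M in
  let H := if h == 0%N then 1%N else (2 * h)%N in
  let GF := \esum_(t in [set t : ptree | retakh t && (height t <= H)%N])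
              ((z ^+ nnodes t)%:E) in
  if h == 0%N then
    GF = (z / (1 - z))%:E /\ GF = (v / (1 + v ^+ 2))%:E
  else
    let F := v ^+ 2 / (1 + v + v ^+ 2) *
             ((1 - v ^+ (2 * h)) / (1 - v ^+ (2 * h + 2))) in
    GF = (z / (1 - z) * (1 - F / (1 - z))^-1)%:E /\
    GF = (v * (1 - v ^+ (2 * h + 2)) / (1 - v ^+ (2 * h + 4)))%:E.
Proof.
move=> M v H GF.
have z3 : 3 * z < 1.
  by move: hz1; rewrite -(ltr_pM2l (x := 3)) // mulfV.
set q := Num.sqrt (1 - 2 * z - 3 * z ^+ 2) in M v GF *.
have hD : 0 <= 1 - 2 * z - 3 * z ^+ 2 by nra.
have hq : q ^+ 2 = 1 - 2 * z - 3 * z ^+ 2 by rewrite sqr_sqrtr.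
have q0 : 0 <= q by rewrite sqrtr_ge0.
have hv : v * (2 * z) = 1 - z - q.
  rewrite /v /M; field; rewrite gt_eqF //.
have qlt : q < 1 - z by nra.
have v0 : 0 < v by nra.
have h4 : 0 < z * (1 - 3 * z) by apply: mulr_gt0; lra.
have qgt : 1 - 3 * z < q by nra.
have v1 : v < 1 by nra.
have hz : z * (1 + v + v ^+ 2) = v.
  apply: (mulfI (x := 4 * z)); first by rewrite gt_eqF //; lra.
  have E : 4 * z * (z * (1 + v + v ^+ 2)) - 4 * z * v
     = 4 * z ^+ 2 + 2 * z * (v * (2 * z)) + (v * (2 * z)) ^+ 2 - 2 * (v * (2 * z)) by ring.
  rewrite hv in E.
  apply/eqP; rewrite -subr_eq0; apply/eqP; rewrite E.
  nra.
have z0 : 0 <= z by exact: ltW.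
have D0 : 0 < 1 + v + v ^+ 2 by nra.
have zE : z = v / (1 + v + v ^+ 2) by rewrite -{1}hz mulfK // gt_eqF.
have hGF : GF = \esum_(t in T 0 H) wt z t by [].
have E2 := @esumT_ge2 _ z v hz0 v0 v1 hz.
have B := @eo_bounds _ z v hz0 v0 v1 hz.
case: h => [|j] in H GF hGF *.
  rewrite /= in hGF.
  have s1 := @esumT0 _ z z0 1.
  rewrite /= in s1.
  have s0 := @esumTS _ z z0 0 0 z z0 ltac:(lra) s1.
  rewrite /= in s0.
  rewrite hGF s0; split => //; congr EFin; rewrite zE; field.
  by apply/andP; split; rewrite gt_eqF //; nra.
rewrite /=.
have HE : H = (2 * j).+2 by rewrite /H /= mulnS.
rewrite HE in hGF.
have [e0 e1 _ _] := B (2 * j)%N.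
have hs2 := E2 (2 * j)%N 2%N erefl.
rewrite /= in hs2.
have hs1 := @esumTS _ z z0 1 (2 * j) _ e0 ltac:(nra) hs2.
rewrite /= in hs1.
set e := (eo z (2 * j)).1 in e0 e1 hs2 hs1.
have e1' : e < 1 - z by nra.
have hs0 := @esumTS _ z z0 0 (2 * j).+1 (z / (1 - e)) ltac:(by rewrite divr_ge0 // ?ltW; lra)
   ltac:(by rewrite ltr_pdivrMr; lra) hs1.
rewrite /= in hs0.
rewrite hGF hs0.
have eE := @eo_even _ z v hz0 v0 v1 hz j.
rewrite -/e in eE.
set w := v ^+ (2 * j) in eE.
have w0 : 0 < w by rewrite exprn_gt0.
have ex n : v ^+ (2 * j.+1 + n) = v ^+ (n + 2) * w.
  by rewrite /w -exprD; congr (_ ^+ _); rewrite mulnS addnC addnA.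
have ex0 : v ^+ (2 * j.+1) = v ^+ 2 * w by rewrite -(ex 0%N) addn0.
rewrite (ex 2%N) (ex 4%N) ex0 eE zE /=.
rewrite !exprS expr0 !mulr1.
have w1 : w <= 1 by rewrite exprn_ile1 // ltW.
have P k := @pow_w_lt _ v w k v0 v1 w0 w1.
have eqpos (x y : R) : x = y -> 0 < x -> y != 0 by move=> -> /gt_eqF ->.
have vv : 0 <= v * v by rewrite mulr_ge0 // ltW.
have Dn : 1 + v + v * v != 0 by rewrite -expr2 gt_eqF.
split; congr EFin; field; repeat (apply/andP; split);
  first [ exact: Dn
        | by rewrite gt_eqF //; lra
        | by apply: (eqpos _ _ _ (P 2%N)); ring
        | by apply: (eqpos _ _ _ (P 3%N)); ring
        | by apply: (eqpos _ _ _ (P 5%N)); ring ].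
Qed.
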